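(* Let $G$ be a concurrent game structure, $T\subseteq S$, and assume all states of $T\cup W_2$ are absorbing. Given a player-1 selector $\xi_1$, the memoryless strategy $\overline{\xi}_1$ is proper if and only if for every pure player-2 selector $\xi_2$ and all states $s\in S$ we have $\Pr_s^{\overline{\xi}_1,\overline{\xi}_2}(\mathrm{Reach}(T\cup W_2))=1$.
   Context: Concurrent game structure $G=(S,M,\Gamma_1,\Gamma_2,\delta)$: finite states $S$, finite moves $M$, nonempty move sets $\Gamma_i(s)\subseteq M$, transition probabilities $\delta(s,a_1,a_2)\in\mathrm{Distr}(S)$ (moves chosen simultaneously and independently). A state is absorbing if every move pair leads back to it with probability 1. A selector for player $i$ assigns to each state $s$ a distribution on $\Gamma_i(s)$; it is pure if each such distribution is a point mass; $\overline{\xi}$ is the memoryless strategy playing $\xi$ at every step. Strategies map finite histories to distributions on available moves; $\Pr_s^{\pi_1,\pi_2}$ is the induced measure on plays from $s$. $\mathrm{Reach}(X)$ is the set of plays visiting $X$. $\mathrm{val}_1(\mathrm{Reach}(T))(s)=\sup_{\pi_1}\inf_{\pi_2}\Pr_s^{\pi_1,\pi_2}(\mathrm{Reach}(T))$ and $W_2=\{s:\mathrm{val}_1(\mathrm{Reach}(T))(s)=0\}$. A player-1 strategy $\pi_1$ is proper if for every player-2 strategy $\pi_2$ and all $s\in S\setminus(T\cup W_2)$, $\Pr_s^{\pi_1,\pi_2}(\mathrm{Reach}(T\cup W_2))=1$; a selector $\xi_1$ is proper if $\overline{\xi}_1$ is. *)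

(* Defs.v *)
From HB Require Import structures.
From mathcomp Require Import all_boot all_order all_algebra.
From mathcomp Require Import boolp classical_sets reals.
Set Implicit Arguments. Unset Strict Implicit. Unset Printing Implicit Defensive.
Import Order.TTheory GRing.Theory Num.Theory.
Local Open Scope ring_scope.
Local Open Scope classical_set_scope.

Section Game.
Variables (R : realType) (S M : finType).

Definition is_distr (T : finType) (d : {ffun T -> R}) : Prop :=
  (forall x, 0 <= d x) /\ \sum_(x : T) d x = 1.

Definition is_distr_on (T : finType) (A : {set T}) (d : {ffun T -> R}) : Prop :=
  is_distr d /\ (forall x, x \notin A -> d x = 0).

Record cgs := CGS {
  gam1 : S -> {set M};
  gam2 : S -> {set M};
  delta : S -> M -> M -> {ffun S -> R};
  gam1_nonempty : forall s, gam1 s != finset.set0;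
  gam2_nonempty : forall s, gam2 s != finset.set0;
  delta_distr : forall s a1 a2, is_distr (delta s a1 a2)
}.

Variable G : cgs.

(* A strategy maps a finite history (prefix of past states, current state)
   to a distribution on moves. *)
Definition strat := seq S -> S -> {ffun M -> R}.

Definition is_strat1 (pi : strat) : Prop :=
  forall h s, is_distr_on (gam1 G s) (pi h s).
Definition is_strat2 (pi : strat) : Prop :=
  forall h s, is_distr_on (gam2 G s) (pi h s).

Definition selector := S -> {ffun M -> R}.
Definition is_selector1 (xi : selector) : Prop :=
  forall s, is_distr_on (gam1 G s) (xi s).
Definition is_selector2 (xi : selector) : Prop :=
  forall s, is_distr_on (gam2 G s) (xi s).
Definition pure_selector (xi : selector) : Prop :=
  forall s, exists m : M, xi s = [ffun a => if a == m then 1 else 0].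

Definition memoryless (xi : selector) : strat := fun _ s => xi s.

(* Probability that the play from history (h, s) visits X within n steps,
   under strategies pi1, pi2 (h = past states, s = current state). *)
Fixpoint reach_within (pi1 pi2 : strat) (X : {set S}) (n : nat)
    (h : seq S) (s : S) : R :=
  if s \in X then 1 else
  match n with
  | 0 => 0
  | n'.+1 => \sum_(a1 : M) \sum_(a2 : M)
       pi1 h s a1 * pi2 h s a2 *
       \sum_(t : S) delta G s a1 a2 t * reach_within pi1 pi2 X n' (rcons h s) t
  end.

(* Pr_s^{pi1,pi2}(Reach X): by continuity of the measure, the supremum over n
   of the probability of visiting X within n steps. *)
Definition prob_reach (pi1 pi2 : strat) (X : {set S}) (s : S) : R :=
  sup (range (fun n => reach_within pi1 pi2 X n [::] s)).

Definition val1 (T : {set S}) (s : S) : R :=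
  sup [set v | exists pi1, is_strat1 pi1 /\
        v = inf [set p | exists pi2, is_strat2 pi2 /\ p = prob_reach pi1 pi2 T s]].

Definition W2 (T : {set S}) : {set S} := [set s | `[< val1 T s = 0 >]].

Definition absorbing (s : S) : Prop :=
  forall a1 a2, a1 \in gam1 G s -> a2 \in gam2 G s -> delta G s a1 a2 s = 1.

Definition is_proper (T : {set S}) (pi1 : strat) : Prop :=
  forall pi2, is_strat2 pi2 ->
  forall s, s \notin T :|: W2 T -> prob_reach pi1 pi2 (T :|: W2 T) s = 1.

Definition proper_selector (T : {set S}) (xi1 : selector) : Prop :=
  is_proper T (memoryless xi1).

End Game.

(* Main.v *)
Require Import Defs.
From HB Require Import structures.
From mathcomp Require Import all_boot all_order all_algebra.
From mathcomp Require Import boolp classical_sets reals.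
Import Order.TTheory GRing.Theory Num.Theory.
Local Open Scope ring_scope.

Section Gen.
Set Implicit Arguments.
Variables (R : realType) (S M : finType) (G : cgs R S M).

Definition Lsum (p1 p2 : {ffun M -> R}) (s : S) (F : S -> R) : R :=
  \sum_(a1 : M) \sum_(a2 : M)
       p1 a1 * p2 a2 * \sum_(t : S) delta G s a1 a2 t * F t.

Lemma LsumD p1 p2 s F H : Lsum p1 p2 s (fun t => F t + H t) = Lsum p1 p2 s F + Lsum p1 p2 s H.
Proof.
rewrite /Lsum -big_split; apply eq_bigr => a1 _; rewrite -big_split; apply eq_bigr => a2 _.
rewrite /= -mulrDr -big_split /=; congr (_ * _); apply eq_bigr => t _; by rewrite mulrDr.
Qed.

Lemma LsumZ p1 p2 s c F : Lsum p1 p2 s (fun t => c * F t) = c * Lsum p1 p2 s F.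
Proof.
rewrite /Lsum mulr_sumr; apply eq_bigr => a1 _; rewrite mulr_sumr; apply eq_bigr => a2 _.
rewrite [RHS]mulrCA; congr (_ * _); rewrite mulr_sumr; apply eq_bigr => t _; by rewrite mulrCA.
Qed.

Lemma LsumC p1 p2 s c : is_distr p1 -> is_distr p2 -> Lsum p1 p2 s (fun _ => c) = c.
Proof.
move=> [_ h1] [_ h2]; rewrite /Lsum.
have e : forall a1 a2, \sum_(t : S) delta G s a1 a2 t * c = c.
  by move=> a1 a2; rewrite -mulr_suml; case: (delta_distr G s a1 a2) => _ ->; rewrite mul1r.
under eq_bigr do under eq_bigr do rewrite e -mulrA.
under eq_bigr do rewrite -mulr_sumr -mulr_suml h2 mul1r.
by rewrite -mulr_suml h1 mul1r.
Qed.

Lemma Lsum_le p1 p2 s F H : is_distr p1 -> is_distr p2 -> (forall t, F t <= H t) ->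
  Lsum p1 p2 s F <= Lsum p1 p2 s H.
Proof.
move=> [g1 _] [g2 _] hF; rewrite /Lsum; apply ler_sum => a1 _; apply ler_sum => a2 _.
apply ler_wpM2l; first by rewrite mulr_ge0.
apply ler_sum => t _; apply ler_wpM2l => //.
by case: (delta_distr G s a1 a2) => ->.
Qed.

Lemma Lsum1B p1 p2 s F : is_distr p1 -> is_distr p2 ->
  Lsum p1 p2 s (fun t => 1 - F t) = 1 - Lsum p1 p2 s F.
Proof.
move=> d1 d2.
have -> : (fun t => 1 - F t) = (fun t => 1 + (-1) * F t).
  by apply: funext => t; rewrite mulN1r.
by rewrite LsumD LsumC // LsumZ mulN1r.
Qed.

Section Reach.
Variables (pi1 pi2 : strat R S M) (X : {set S}).
Hypothesis hd1 : forall h s, is_distr (pi1 h s).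
Hypothesis hd2 : forall h s, is_distr (pi2 h s).
Local Notation rw := (reach_within G pi1 pi2 X).

Lemma rw_step n h s : s \notin X -> rw n.+1 h s = Lsum (pi1 h s) (pi2 h s) s (rw n (rcons h s)).
Proof. by move=> hs; rewrite /= (negbTE hs). Qed.

Lemma rw_in n h s : s \in X -> rw n h s = 1.
Proof. by move=> hs; case: n => [|n] /=; rewrite hs. Qed.

Lemma rw_bounds n h s : 0 <= rw n h s <= 1.
Proof.
elim: n h s => [|n IH] h s.
  by case: (boolP (s \in X)) => hs; rewrite /= ?(negbTE hs) ?hs ?lexx ?ler01.
case: (boolP (s \in X)) => hs; first by rewrite rw_in // ler01 lexx.
rewrite rw_step //; apply/andP; split.
  have := Lsum_le s (fun _ => 0) (rw n (rcons h s)) (hd1 h s) (hd2 h s).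
  rewrite LsumC //; apply => t; by case/andP: (IH (rcons h s) t).
have := Lsum_le s (rw n (rcons h s)) (fun _ => 1) (hd1 h s) (hd2 h s).
rewrite LsumC //; apply => t; by case/andP: (IH (rcons h s) t).
Qed.

Lemma renewal m B : 0 <= B -> (forall h s, 1 - rw m h s <= B) ->
  forall k h s, 1 - rw (k + m) h s <= B * (1 - rw k h s).
Proof.
move=> B0 hB; elim => [|k IH] h s.
  case: (boolP (s \in X)) => hs; first by rewrite !rw_in // subrr mulr0.
  by rewrite add0n /= (negbTE hs) subr0 mulr1.
case: (boolP (s \in X)) => hs; first by rewrite !rw_in // subrr mulr0.
rewrite addSn !rw_step // -!Lsum1B // -LsumZ.
by apply: Lsum_le => // t; apply: IH.
Qed.

End Reach.
End Gen.

From mathcomp Require Import lra.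

Lemma sup_eq1 (R : realType) (u : nat -> R) : (forall n, u n <= 1) ->
  (forall e, 0 < e -> exists n, 1 - e <= u n) -> sup (range u) = 1.
Proof.
move=> hu he; apply/le_anti/andP; split.
  by apply: ge_sup; [exists (u 0%N), 0%N | move=> x [n _ <-]].
rewrite leNgt; apply/negP => hlt.
have hb : has_ubound (range u) by exists 1 => x [n _ <-].
have /he [n hn] : 0 < (1 - sup (range u)) / 2 by rewrite divr_gt0 // subr_gt0.
have : u n <= sup (range u) by apply: ub_le_sup => //; exists n.
lra.
Qed.

Section Main.
Variables (R : realType) (S M : finType) (G : cgs R S M) (X : {set S})
  (xi1 : selector R S M).
Hypothesis hxi1 : is_selector1 G xi1.

Definition pp s a2 t := \sum_(a1 : M) xi1 s a1 * delta G s a1 a2 t.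

Lemma hx1 s : is_distr (xi1 s). Proof. by case: (hxi1 s). Qed.
Lemma delta_ge0 s a1 a2 t : 0 <= delta G s a1 a2 t.
Proof. by case: (delta_distr G s a1 a2) => ->. Qed.
Lemma pp_ge0 s a2 t : 0 <= pp s a2 t.
Proof. apply: sumr_ge0 => a1 _; apply: mulr_ge0; [by case: (hx1 s) => -> | exact: delta_ge0]. Qed.

Lemma Lsum_rearr p2 s F : Lsum G (xi1 s) p2 s F =
  \sum_(a2 : M) p2 a2 * \sum_(t : S) pp s a2 t * F t.
Proof.
rewrite /Lsum exchange_big; apply: eq_bigr => a2 _.
apply/esym; rewrite /pp.
rewrite (eq_bigr (fun t => \sum_a1 xi1 s a1 * delta G s a1 a2 t * F t)); last first.
  by move=> t _; rewrite mulr_suml.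
rewrite exchange_big mulr_sumr; apply: eq_bigr => a1 _.
under eq_bigr do rewrite -mulrA.
by rewrite -mulr_sumr mulrCA mulrA.
Qed.

Fixpoint Z k : {set S} := if k is k'.+1 then
  Z k' :|: [set s | [forall a2 in gam2 G s, [exists t in Z k', 0 < pp s a2 t]]]
  else X.

Lemma Z_mono m n : (m <= n)%N -> Z m \subset Z n.
Proof.
elim: n => [|n IH]; first by rewrite leqn0 => /eqP ->.
rewrite leq_eqVlt => /orP [/eqP -> // | hm].
apply: (fintype.subset_trans (IH hm)); exact: finset.subsetUl.
Qed.

Lemma Z_fix : exists k, Z k.+1 = Z k.
Proof.
case: (pselect (exists k, Z k.+1 = Z k)) => // hn.
have hc : forall k, (k <= #|Z k|)%N.
  elim=> [//|k IH].
  have hp : Z k \proper Z k.+1.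
    rewrite finset.properEneq /= finset.subsetUl andbT.
    by apply/eqP => e; apply: hn; exists k; rewrite /= -e.
  exact: leq_ltn_trans IH (proper_card hp).
by have := hc #|S|.+1; rewrite leqNgt ltnS max_card.
Qed.

Lemma eta_ex : exists2 eta : R, 0 < eta <= 1 &
  forall s a2 t, 0 < pp s a2 t -> eta <= pp s a2 t.
Proof.
pose e := \big[Num.min/1]_(x : S * M * S | 0 < pp x.1.1 x.1.2 x.2) pp x.1.1 x.1.2 x.2.
have e0 : 0 < e.
  rewrite /e; apply: (big_ind (fun v => 0 < v)) => //.
  by move=> x y hx hy; rewrite lt_min hx hy.
exists (Num.min e 1).
  by rewrite lt_min e0 ltr01 ge_min lexx orbT.
move=> s a2 t hp; rewrite ge_min; apply/orP; left.
by rewrite /e (bigD1 (s, a2, t)) //= ge_min lexx.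
Qed.

Lemma lower pi2 (hp2 : is_strat2 G pi2) eta (he : 0 < eta <= 1)
  (hpe : forall s a2 t, 0 < pp s a2 t -> eta <= pp s a2 t) :
  forall k n h s, (k <= n)%N -> s \in Z k ->
  eta ^+ k <= reach_within G (memoryless xi1) pi2 X n h s.
Proof.
have hd1 : forall h s, is_distr (memoryless xi1 h s) by move=> h s; exact: hx1.
have hd2 : forall h s, is_distr (pi2 h s) by move=> h s; case: (hp2 h s).
case/andP: he => e0 e1; have e0' := ltW e0.
elim=> [|k IH] n h s hkn hs.
  by rewrite expr0 rw_in.
case/setUP: hs => [hs|hs].
  apply: le_trans (IH n h s (ltnW hkn) hs).
  by rewrite exprS ler_piMl // exprn_ge0.
case: (boolP (s \in X)) => hsX; first by rewrite rw_in // exprn_ile1.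
case: n hkn => [//|n] hkn.
rewrite rw_step // /memoryless Lsum_rearr.
rewrite inE in hs.
case: (hd2 h s) => g0 g1.
apply: le_trans (_ : \sum_a2 pi2 h s a2 * eta ^+ k.+1 <= _).
  by rewrite -mulr_suml g1 mul1r.
apply: ler_sum => a2 _.
case: (boolP (a2 \in gam2 G s)) => ha2; last first.
  by case: (hp2 h s) => _ ->//; rewrite !mul0r.
apply: ler_wpM2l => //.
move/forallP: hs => /(_ a2); rewrite ha2 /= => /existsP [t /andP [ht hpt]].
rewrite (bigD1 t) //= exprS.
apply: le_trans (_ : pp s a2 t * reach_within G (memoryless xi1) pi2 X n (rcons h s) t <= _).
  apply: ler_pM => //; first exact: exprn_ge0.
    exact: hpe.
  exact: IH.
rewrite lerDl; apply: sumr_ge0 => t' _; apply: mulr_ge0; first exact: pp_ge0.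
by case/andP: (rw_bounds G _ _ X hd1 hd2 n (rcons h s) t').
Qed.

Lemma zero k (xi2 : selector R S M)
  (hxi2 : forall s, s \notin Z k -> forall a2, xi2 s a2 != 0 ->
     forall t, t \in Z k -> pp s a2 t = 0) :
  forall n h s, s \notin Z k ->
  reach_within G (memoryless xi1) (memoryless xi2) X n h s = 0.
Proof.
elim=> [|n IH] h s hs; have hsX : s \notin X.
- by apply: contra hs => hx; move: (@Z_mono 0 k (leq0n k)) => /fintype.subsetP; apply.
- by rewrite /= (negbTE hsX).
- by apply: contra hs => hx; move: (@Z_mono 0 k (leq0n k)) => /fintype.subsetP; apply.
rewrite rw_step // /memoryless Lsum_rearr big1 // => a2 _.
case: (eqVneq (xi2 s a2) 0) => [-> | hne]; first by rewrite mul0r.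
rewrite big1 ?mulr0 // => t _.
case: (boolP (t \in Z k)) => ht; first by rewrite hxi2 // mul0r.
by rewrite IH // mulr0.
Qed.

Lemma construct k (hfix : Z k.+1 = Z k) (m0 : M) :
  exists xi2, [/\ is_selector2 G xi2, pure_selector xi2 &
   forall s, s \notin Z k -> forall a2, xi2 s a2 != 0 ->
     forall t, t \in Z k -> pp s a2 t = 0].
Proof.
pose a s := if [pick a in gam2 G s | ~~ [exists t in Z k, 0 < pp s a t]] is Some a then a
  else odflt m0 [pick a in gam2 G s].
have ha : forall s, a s \in gam2 G s.
  move=> s; rewrite /a; case: pickP => [x /andP [hx _] // | _].
  case: pickP => [x hx // | hn]; exfalso.
  have /set0Pn [y hy] := gam2_nonempty G s.
  by have := hn y; rewrite hy.
have hb : forall s, s \notin Z k -> ~~ [exists t in Z k, 0 < pp s (a s) t].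
  move=> s hs; have : s \notin Z k.+1 by rewrite hfix.
  rewrite /= inE negb_or => /andP [_]; rewrite inE => hf.
  rewrite /a; case: pickP => [x /andP [_ hx] // | hn]; exfalso.
  move/negP: hf; apply; apply/forallP => x; apply/implyP => hx.
  by have := hn x; rewrite hx /= => /negbFE.
exists (fun s => [ffun a2 => if a2 == a s then (1 : R) else 0]); split.
- move=> s; split; first split.
  + by move=> x; rewrite ffunE; case: eqP => _; rewrite ?ler01 ?lexx.
  + rewrite (bigD1 (a s)) //= ffunE eqxx big1 ?addr0 // => x /negbTE hx.
    by rewrite ffunE hx.
  + move=> x hx; rewrite ffunE; case: eqP => // ex; move: hx; by rewrite ex ha.
- by move=> s; exists (a s).
- move=> s hs a2; rewrite ffunE; case: (eqVneq a2 (a s)) => [-> _ | hne]; last by rewrite eqxx.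
  move=> t ht; have := pp_ge0 s (a s) t; rewrite le_eqVlt => /orP [/eqP <- // | hlt].
  exfalso; move/negP: (hb s hs); apply; apply/existsP; exists t; by rewrite ht hlt.
Qed.

End Main.

Theorem lemma1 (R : realType) (S M : finType) (G : cgs R S M) (T : {set S})
  (habs : forall s, s \in T :|: W2 G T -> absorbing G s)
  (xi1 : selector R S M) (hxi1 : is_selector1 G xi1) :
  is_proper G T (memoryless xi1) <->
  (forall xi2 : selector R S M, is_selector2 G xi2 -> pure_selector xi2 ->
     forall s : S, prob_reach G (memoryless xi1) (memoryless xi2) (T :|: W2 G T) s = 1).
Proof.
set X := T :|: W2 G T.
have hd1 : forall h s, is_distr (memoryless xi1 h s) by move=> h s; by case: (hxi1 s).
split.
  move=> hprop xi2 hxi2 hpure s.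
  case: (boolP (s \in X)) => hs.
    apply: sup_eq1 => [n|e he]; first by rewrite rw_in.
    by exists 0%N; rewrite rw_in // gerBl ltW.
  by apply: hprop => // h s'; apply: hxi2.
move=> hall pi2 hp2 s hs.
have hd2 : forall h s, is_distr (pi2 h s) by move=> h s'; case: (hp2 h s').
have [k hfix] := Z_fix G X xi1.
have hZ : forall s0, s0 \in Z G X xi1 k.
  move=> s0; case: (boolP (s0 \in Z G X xi1 k)) => // hs0; exfalso.
  have /set0Pn [m0 _] := gam2_nonempty G s0.
  have [xi2 [hsel hpure hz]] := construct hxi1 hfix m0.
  have := hall xi2 hsel hpure s0; rewrite /prob_reach.
  have -> : (fun n => reach_within G (memoryless xi1) (memoryless xi2) X n [::] s0) = fun=> 0.
    by apply: funext => n; rewrite (zero X _ _ hz).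
  have : sup (range (fun _ : nat => (0:R))) <= 0.
    by apply: ge_sup; [exists 0, 0%N | move=> x [n _ <-]].
  move=> h1 h2; rewrite h2 in h1; by rewrite ler10 in h1.
have [eta he hpe] := eta_ex G xi1.
have heps : 0 < eta ^+ k <= 1.
  by case/andP: he => e0 e1; rewrite exprn_gt0 // exprn_ile1 // ltW.
set eps := eta ^+ k in heps.
case/andP: heps => eps0 eps1.
have hN : forall h s', 1 - reach_within G (memoryless xi1) pi2 X k h s' <= 1 - eps.
  move=> h s'; have := lower X hxi1 hp2 _ he hpe k k h (leqnn k) (hZ s'); rewrite -/eps; lra.
have geo : forall j h s', 1 - reach_within G (memoryless xi1) pi2 X (j * k) h s' <= (1 - eps) ^+ j.
  elim=> [|j IH] h s'.
    rewrite mul0n expr0 gerBl; by case/andP: (rw_bounds G _ _ X hd1 hd2 0 h s').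
  rewrite mulSn addnC exprS.
  have B0 : 0 <= 1 - eps by lra.
  apply: le_trans (renewal G _ _ X hd1 hd2 k (1 - eps) B0 hN (j * k) h s') _.
  by apply: ler_wpM2l; [lra | apply: IH].
have bern : forall j : nat, (1 - eps) ^+ j * (1 + j%:R * eps) <= 1.
  elim=> [|j IH]; first by rewrite expr0 mul0r addr0 mulr1.
  rewrite exprS -natr1.
  have hx : 0 <= (1 - eps) ^+ j by apply: exprn_ge0; lra.
  have ha : 0 <= (j%:R : R) by apply: ler0n.
  have h2 : 0 <= (1 - eps) ^+ j * (j%:R + 1) * (eps * eps).
    by rewrite !mulr_ge0 // ?addr_ge0 // ltW.
  nra.
apply: sup_eq1 => [n|e he0].
  by case/andP: (rw_bounds G _ _ X hd1 hd2 n [::] s).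
have hy : 0 <= 1 / (e * eps) by rewrite divr_ge0 // ltW // mulr_gt0.
have := archi_boundP hy; set J := Num.Def.archi_bound _ => hJ.
rewrite ltr_pdivrMr ?mulr_gt0 // in hJ.
exists (J * k)%N.
have := geo J [::] s; have := bern J.
have hx : 0 <= (1 - eps) ^+ J by apply: exprn_ge0; lra.
have hJ0 : 0 <= (J%:R : R) by apply: ler0n.
have hJe : 0 <= (J%:R : R) * eps by rewrite mulr_ge0 // ltW.
move=> hb hg.
suff : (1 - eps) ^+ J <= e by lra.
nra.
Qed.
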